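(* Let $k\geq 2$ and $1\leq i\leq k-1$ be integers, and for each $1\leq j\leq i-1$ let $S_j$ be any triangle-free $(k-j)$-critical graph without isolated vertices. Let $U=U(S_1,\dots,S_{i-1})$ (for $i=1$, $U$ is a single vertex, which is active). Then: (1) For every active vertex $u$ of $U$, $U$ can be properly $(k-1)$-colored so that at most $i$ different colors appear at active vertices, and among active vertices one of these colors (the $i$th) appears only at $u$. (2) In any proper $(k-1)$-coloring of $U$, at least $i$ different colors occur as colors of active vertices. (3) If any edge is removed from $U$, the resulting graph can be properly $(k-1)$-colored so that at most $i-1$ colors occur at active vertices.
   Context: A graph is $r$-critical if it has chromatic number $r$ and removing any edge allows it to be properly $(r-1)$-colored. Given graphs $S_1,\dots,S_t$, the graph $U(S_1,\dots,S_t)$ is constructed as follows: take the disjoint union of the graphs $S_1,\dots,S_t$ together with a new independent set $A=\prod_{m=1}^t V(S_m)$ (the set of active vertices; its elements are $t$-tuples), and for each $m$ join each vertex $v\in V(S_m)$ to every $u\in A$ whose $m$th coordinate equals $v$. (Edges inside each $S_m$ are kept.) In the paper this graph, with $S_j$ triangle-free $(k-j)$-critical, is denoted $U^{k-1}_{k-i+1}=U(k-1,k-2,\dots,k-i+1)$. *)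

(* Defs.v *)
From mathcomp Require Import all_boot.
Set Implicit Arguments. Unset Strict Implicit. Unset Printing Implicit Defensive.

Record sgraph := SGraph {
  svert :> finType;
  sadj : rel svert;
  sadj_sym : symmetric sadj;
  sadj_irr : irreflexive sadj }.

Definition proper_col (T : finType) (e : rel T) (c : nat) (f : T -> 'I_c) : Prop :=
  forall x y, e x y -> f x != f y.

Definition colorable (T : finType) (e : rel T) (c : nat) : Prop :=
  exists f : T -> 'I_c, proper_col e f.

Definition chromatic_eq (T : finType) (e : rel T) (r : nat) : Prop :=
  colorable e r /\ ~ colorable e r.-1.

Definition remove_edge (T : finType) (e : rel T) (x y : T) : rel T :=
  fun a b => e a b && ~~ (((a == x) && (b == y)) || ((a == y) && (b == x))).

Definition critical (r : nat) (G : sgraph) : Prop :=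
  chromatic_eq (sadj (s:=G)) r /\
  forall x y : G, sadj x y -> colorable (remove_edge (sadj (s:=G)) x y) r.-1.

Definition triangle_free (G : sgraph) : Prop :=
  forall x y z : G, ~ [&& sadj x y, sadj y z & sadj x z].

Definition no_isolated (G : sgraph) : Prop :=
  forall x : G, exists y : G, sadj x y.

(* The graph U(S_1,...,S_n): disjoint union of the S_j (left summand) and the
   independent set A = prod_j V(S_j) of active vertices (right summand). *)
Definition Uvert (n : nat) (S : 'I_n -> sgraph) : finType :=
  ({j : 'I_n & svert (S j)} + {dffun forall j : 'I_n, svert (S j)})%type.

Definition Uadj (n : nat) (S : 'I_n -> sgraph) : rel (Uvert S) :=
  fun x y =>
    match x, y with
    | inl p, inl q => (tag p == tag q) && sadj (tagged p) (tagged_as p q)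
    | inl p, inr a => a (tag p) == tagged p
    | inr a, inl p => a (tag p) == tagged p
    | inr _, inr _ => false
    end.

Definition active_colors (n : nat) (S : 'I_n -> sgraph) (c : nat)
    (f : Uvert S -> 'I_c) : {set 'I_c} :=
  [set f (inr a) | a : {dffun forall j : 'I_n, svert (S j)}].

(* Main.v *)
Require Import Defs.
From mathcomp Require Import all_boot.
From mathcomp Require Import zify.
Set Implicit Arguments. Unset Strict Implicit. Unset Printing Implicit Defensive.

Lemma colors_count (G : sgraph) c r (h : G -> 'I_c) :
  (forall x y, sadj x y -> h x != h y) -> ~ colorable (sadj (s:=G)) r ->
  r < #|h @: setT|.
Proof.
move=> hp ncol; rewrite ltnNge; apply/negP => hle; apply: ncol.
set A := h @: setT.
have H x : index (h x) (enum A) < r.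
  apply: leq_trans hle; rewrite cardE index_mem mem_enum.
  by apply: imset_f.
exists (fun x => Ordinal (H x)) => x y exy; apply/negP => /eqP [] hi.
have memA z : h z \in enum A by rewrite mem_enum imset_f.
have := hp _ _ exy.
have : nth (h x) (enum A) (index (h x) (enum A)) = nth (h x) (enum A) (index (h y) (enum A)) by rewrite hi.
by rewrite !nth_index ?memA // => ->; rewrite eqxx.
Qed.

Lemma cover c n : forall (T : 'I_n -> {set 'I_c}) (C : {set 'I_c}),
  (forall j, #|~: T j| <= j) -> (forall j, T j != set0) -> #|C| <= n ->
  exists g : 'I_n -> 'I_c, (forall j, g j \in T j) /\
     (forall y, y \in C -> exists j, g j = y).
Proof.
elim: n => [|n IH] T C hT hne hC.
  have f0 : 'I_0 -> 'I_c by case.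
  exists f0; split => [[]//|y yC].
  by move: hC; rewrite leqn0 cards_eq0 => /eqP C0; rewrite C0 inE in yC.
pose T' (j : 'I_n) := T (lift ord_max j).
have hT' j : #|~: T' j| <= j.
  have := hT (lift ord_max j); rewrite /= /bump.
  move=> h; have e : (n <= j) = false by rewrite leqNgt ltn_ord.
  by rewrite e in h.
have hne' j : T' j != set0 by apply: hne.
case: (set_0Vmem (C :&: T ord_max)) => [CT0 | [x xCT]].
  have hC' : #|C| <= n.
    apply: leq_trans (hT ord_max); apply: subset_leq_card; apply/subsetP => y yC.
    rewrite inE; apply/negP => yT.
    by have := set0 : {set 'I_c}; move: CT0 => /setP /(_ y); rewrite !inE yC yT.
  have [x0 x0T] : exists x, x \in T ord_max by apply/set0Pn.
  have [g' [g'T g'C]] := IH T' C hT' hne' hC'.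
  exists (fun j => if unlift ord_max j is Some j' then g' j' else x0); split.
    by move=> j; case: unliftP => [j' ->|->].
  move=> y /g'C [j' <-]; exists (lift ord_max j'); by rewrite liftK.
move: xCT; rewrite inE => /andP [xC xT].
have hC' : #|C :\ x| <= n by move: hC; rewrite (cardsD1 x C) xC.
have [g' [g'T g'C]] := IH T' _ hT' hne' hC'.
exists (fun j => if unlift ord_max j is Some j' then g' j' else x); split.
  by move=> j; case: unliftP => [j' ->|->].
move=> y yC; case: (eqVneq y x) => [->|yx].
  by exists ord_max; rewrite unlift_none.
have : y \in C :\ x by rewrite !inE yx yC.
move=> /g'C [j' <-]; exists (lift ord_max j'); by rewrite liftK.
Qed.

Definition firstdiff n (P : pred 'I_n) : nat :=
  if [pick j | P j] is Some j0 then nat_of_ord [arg min_(j < j0 | P j) nat_of_ord j] else n.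

Lemma firstdiffP n (P : pred 'I_n) :
  (exists j : 'I_n, [/\ P j, nat_of_ord j = firstdiff P & forall m : 'I_n, m < j -> ~~ P m])
  \/ (firstdiff P = n /\ forall m, ~~ P m).
Proof.
rewrite /firstdiff; case: pickP => [j0 Pj0 | nP]; last by right; split=> // m; rewrite nP.
left; case: arg_minnP => // j Pj jmin; exists j; split=> // m mj.
by apply/negP => /jmin; rewrite leqNgt mj.
Qed.

Lemma active_col n (S : 'I_n -> sgraph) (g : forall m, S m -> nat)
  (hg : forall (m : 'I_n) v, m <= g m v) (a : {dffun forall j : 'I_n, svert (S j)}) (m : 'I_n) :
  firstdiff (fun j => g j (a j) != j) != g m (a m).
Proof.
case: (firstdiffP (fun j => g j (a j) != j)) => [[j [Pj <- jmin]] | [-> hall]].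
  case: (ltngtP m j) => [mj|jm|/val_inj ->].
  - by have := jmin _ mj; rewrite negbK => /eqP ->; rewrite neq_ltn mj orbT.
  - by rewrite neq_ltn; apply/orP; left; exact: leq_trans jm (hg _ _).
  - by rewrite eq_sym.
have := hall m; rewrite negbK => /eqP ->; by rewrite neq_ltn ltn_ord orbT.
Qed.

Lemma firstdiff_le n (P : pred 'I_n) : firstdiff P <= n.
Proof. by case: (firstdiffP P) => [[j [_ <- _]] | [-> _]] //; apply: ltnW. Qed.

Lemma firstdiff_lt n (P : pred 'I_n) j : P j -> firstdiff P < n.
Proof. by case: (firstdiffP P) => [[j' [_ <- _]] | [_ h]] //; rewrite (negbTE (h j)). Qed.

Lemma crit_color (G : sgraph) r m c (v : G) : critical r G -> no_isolated G -> m + r = c ->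
  exists h : G -> nat, [/\ h v = m, (forall x, x != v -> m < h x),
     (forall x, h x < c) & (forall x y, sadj x y -> h x != h y)].
Proof.
move=> [_ hrem] hni hc; have [w vw] := hni v.
have [f1 hf1] := hrem v w vw.
exists (fun x => if x == v then m else m.+1 + f1 x); split.
- by rewrite eqxx.
- by move=> x /negbTE ->; rewrite ltnS leq_addr.
- move=> x; case: eqP => _; have := ltn_ord (f1 x); lia.
move=> x y xy; case: (eqVneq x v) => [exv|nxv]; case: (eqVneq y v) => [eyv|nyv].
- by subst; rewrite sadj_irr in xy.
- by rewrite neq_ltn ltnS leq_addr.
- by rewrite neq_ltn ltnS leq_addr orbT.
rewrite eqn_add2l; apply: hf1; rewrite /remove_edge xy.
by rewrite (negbTE nxv) (negbTE nyv) /= andbF.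
Qed.

Lemma crit_color2 (G : sgraph) r m c (x0 y0 : G) : critical r G -> sadj x0 y0 -> m + r = c ->
  exists h : G -> nat, [/\ (forall x, m < h x),
     (forall x, h x < c) & (forall x y, remove_edge (sadj (s:=G)) x0 y0 x y -> h x != h y)].
Proof.
move=> [_ hrem] xy hc; have [f1 hf1] := hrem x0 y0 xy.
exists (fun x => m.+1 + f1 x); split.
- by move=> x; rewrite ltnS leq_addr.
- move=> x; have := ltn_ord (f1 x); lia.
by move=> x y e; rewrite eqn_add2l; apply: hf1.
Qed.

Lemma crit_color0 (G : sgraph) r m c : critical r G -> m + r = c ->
  exists h : G -> nat, [/\ (forall x, m <= h x),
     (forall x, h x < c) & (forall x y, sadj x y -> h x != h y)].
Proof.
move=> [[[f1 hf1] _] _] hc.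
exists (fun x => m + f1 x); split.
- by move=> x; rewrite leq_addr.
- move=> x; have := ltn_ord (f1 x); lia.
by move=> x y e; rewrite eqn_add2l; apply: hf1.
Qed.

Definition Ucol n c (S : 'I_n -> sgraph) (d : 'I_c) (g : forall m, S m -> nat)
  (ca : {dffun forall j : 'I_n, svert (S j)} -> nat) : Uvert S -> 'I_c :=
  fun x => match x with inl p => insubd d (g (tag p) (tagged p)) | inr a => insubd d (ca a) end.

Lemma insubd_neq c (d : 'I_c) x y : x < c -> y < c -> x != y -> insubd d x != insubd d y.
Proof.
move=> xc yc; apply: contra => /eqP e; have := congr1 val e.
by rewrite !val_insubd xc yc => ->.
Qed.

Lemma Uadj_inl n (S : 'I_n -> sgraph) m (v w : S m) :
  Uadj (inl (Tagged (fun j => svert (S j)) v)) (inl (Tagged (fun j => svert (S j)) w)) = sadj v w.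
Proof. by rewrite /Uadj /= eqxx tagged_asE. Qed.

Lemma build_proper n c (S : 'I_n -> sgraph) (R : rel (Uvert S)) (d : 'I_c)
  (g : forall m, S m -> nat) (ca : {dffun forall j : 'I_n, svert (S j)} -> nat) :
  (forall x y, R x y -> Uadj x y) ->
  (forall m v, g m v < c) -> (forall a, ca a < c) ->
  (forall m (v w : S m), R (inl (Tagged (fun j => svert (S j)) v)) (inl (Tagged (fun j => svert (S j)) w)) -> g m v != g m w) ->
  (forall a m, R (inr a) (inl (Tagged (fun j => svert (S j)) (a m))) || R (inl (Tagged (fun j => svert (S j)) (a m))) (inr a) -> ca a != g m (a m)) ->
  proper_col R (Ucol d g ca).
Proof.
move=> RU gc cac hin hact [[m v]|a] [[m' w]|b] /= e; have := RU _ _ e => /=.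
- move=> /andP [/eqP /= mm _]; subst m'.
  by apply: insubd_neq => //; apply: hin.
- move=> /eqP /= bm; subst v; apply: insubd_neq => //; rewrite eq_sym; apply: hact.
  by rewrite e orbT.
- move=> /eqP /= am; subst w; apply: insubd_neq => //; apply: hact.
  by rewrite e.
by [].
Qed.

Lemma active_card n c (S : 'I_n -> sgraph) (d : 'I_c) g ca t :
  (forall a, ca a < t) -> (forall a, ca a < c) -> #|@active_colors n S c (Ucol d g ca)| <= t.
Proof.
move=> hct hcc.
apply: (@leq_trans #|(fun s : 'I_t => insubd d (val s)) @: setT|); last first.
  by apply: leq_trans (leq_imset_card _ _) _; rewrite cardsT card_ord.
apply: subset_leq_card; apply/subsetP => y /imsetP [a _ ->].
by apply/imsetP; exists (Ordinal (hct a)).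
Qed.

Lemma arith1 n k (j : 'I_n) : n < k - 1 -> j + (k - j.+1) = k - 1.
Proof. have := ltn_ord j; lia. Qed.

Lemma part1 n k (S : 'I_n -> sgraph) (hnk : n < k - 1)
  (HS : forall j : 'I_n, critical (k - j.+1) (S j) /\ no_isolated (S j)) (d : 'I_(k-1))
  (u : {dffun forall j : 'I_n, svert (S j)}) :
  exists f : Uvert S -> 'I_(k - 1),
       [/\ proper_col (@Uadj _ S) f,
           #|active_colors f| <= n.+1 &
           forall w, w != u -> f (inr w) != f (inr u)].
Proof.
have H (m : 'I_n) : exists h : S m -> nat, [/\ h (u m) = m, (forall x, x != u m -> m < h x),
     (forall x, h x < k - 1) & (forall x y, sadj x y -> h x != h y)].
  by have [hc hn] := HS m; apply: crit_color hc hn (arith1 _ hnk).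
have [g hg] := fin_all_exists H.
have gm (m : 'I_n) v : m <= g m v.
  by have [e1 e2 _ _] := hg m; case: (eqVneq v (u m)) => [->|/e2/ltnW //]; rewrite e1.
pose ca a := firstdiff (fun j => g j (a j) != j).
have cale a : ca a <= n by apply: firstdiff_le.
exists (Ucol d g ca); split.
- apply: build_proper => //.
  + by move=> m v; have [_ _ b _] := hg m.
  + by move=> a; apply: leq_ltn_trans hnk.
  + by move=> m v w; rewrite Uadj_inl; have [_ _ _ p] := hg m; apply: p.
  + by move=> a m _; apply: active_col.
- by apply: active_card => a; [exact: cale | exact: leq_ltn_trans (cale a) hnk].
move=> w wu /=.
have cu : ca u = n.
  rewrite /ca; case: (firstdiffP (fun j => g j (u j) != j)) => [[j [Pj _ _]] | [-> _]] //.
  by have [e1 _ _ _] := hg j; rewrite e1 eqxx in Pj.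
have cw : ca w < n.
  have [j wj] : exists j, w j != u j.
    apply/existsP; apply: contraR wu => /existsPn h; apply/eqP/ffunP => j.
    by apply/eqP; have := h j; rewrite negbK.
  apply: (@firstdiff_lt _ _ j); have [_ e2 _ _] := hg j.
  by rewrite neq_ltn e2 // orbT.
rewrite /Ucol; apply: insubd_neq.
- exact: leq_ltn_trans (cale _) hnk.
- exact: leq_ltn_trans (cale _) hnk.
by rewrite cu neq_ltn cw.
Qed.

Lemma part2 n k (S : 'I_n -> sgraph) (hnk : n < k - 1)
  (HS : forall j : 'I_n, critical (k - j.+1) (S j) /\ no_isolated (S j))
  (f : Uvert S -> 'I_(k - 1)) : proper_col (@Uadj _ S) f -> n.+1 <= #|active_colors f|.
Proof.
move=> pf; rewrite ltnNge; apply/negP => hC.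
pose T (j : 'I_n) := (fun v : S j => f (inl (Tagged (fun j0 => svert (S j0)) v))) @: setT.
have hcount (j : 'I_n) : (k - j.+1).-1 < #|T j|.
  have [[[_ nc] _] _] := HS j.
  apply: colors_count nc => v w vw; apply: pf; by rewrite Uadj_inl.
have hT (j : 'I_n) : #|~: T j| <= j.
  have := cardsC (T j); rewrite card_ord; have := hcount j; have := ltn_ord j; lia.
have hne (j : 'I_n) : T j != set0.
  by rewrite -card_gt0; apply: leq_ltn_trans (hcount j).
have [g [gT gC]] := cover hT hne hC.
have H (j : 'I_n) : exists v : S j, g j = f (inl (Tagged (fun j0 => svert (S j0)) v)).
  by have /imsetP [v _ ->] := gT j; exists v.
have [a0 ha0] := fin_all_exists H.
pose a : {dffun forall j : 'I_n, svert (S j)} := finfun a0.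
have : f (inr a) \in active_colors f by apply: imset_f.
move=> /gC [j]; rewrite ha0 => e.
have := pf (inr a) (inl (Tagged (fun j0 => svert (S j0)) (a0 j))).
by rewrite /Uadj /= /a ffunE eqxx e eqxx => /(_ isT).
Qed.

Lemma inl_Tagged_eq n (S : 'I_n -> sgraph) m (v w : S m) :
  (inl (Tagged (fun j => svert (S j)) v) == inl (Tagged (fun j => svert (S j)) w) :> Uvert S) = (v == w).
Proof. by rewrite [LHS]/eq_op /= eq_Tagged. Qed.

Lemma remove_edgeC (T : finType) (e : rel T) x y a b :
  remove_edge e x y a b = remove_edge e y x a b.
Proof. by rewrite /remove_edge orbC. Qed.

Lemma part3_in n k (S : 'I_n -> sgraph) (hnk : n < k - 1)
  (HS : forall j : 'I_n, critical (k - j.+1) (S j) /\ no_isolated (S j)) (d : 'I_(k-1))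
  (m0 : 'I_n) (v0 w0 : S m0) (hvw : sadj v0 w0) :
  exists f : Uvert S -> 'I_(k - 1),
    proper_col (remove_edge (@Uadj _ S) (inl (Tagged (fun j => svert (S j)) v0))
                                        (inl (Tagged (fun j => svert (S j)) w0))) f /\
    #|active_colors f| <= n.
Proof.
set X := inl _; set Y := inl _.
have H (m : 'I_n) : exists h : S m -> nat, [/\ forall x, m <= h x,
     forall x, m == m0 -> m < h x, forall x, h x < k - 1 &
     forall v w, remove_edge (@Uadj _ S) X Y (inl (Tagged (fun j => svert (S j)) v))
                  (inl (Tagged (fun j => svert (S j)) w)) -> h v != h w].
  case: (eqVneq m m0) => [->|ne].
    have [h [h1 h2 h3]] := crit_color2 (HS m0).1 hvw (arith1 _ hnk).
    exists h; split; [by move=> x; exact: ltnW | by move=> x _ | by [] | move=> v w].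
    rewrite /remove_edge Uadj_inl /X /Y !inl_Tagged_eq => /andP [vw nb].
    by apply: h3; rewrite /remove_edge vw.
  have [h [h1 h2 h3]] := crit_color0 (HS m).1 (arith1 _ hnk).
  exists h; split; [by [] | by move=> x | by [] | move=> v w].
  by rewrite /remove_edge Uadj_inl => /andP [vw _]; apply: h3.
have [g hg] := fin_all_exists H.
pose ca a := firstdiff (fun j => g j (a j) != j).
have calt a : ca a < n.
  apply: (@firstdiff_lt _ _ m0); have [_ e2 _ _] := hg m0.
  by rewrite neq_ltn e2 ?eqxx // orbT.
exists (Ucol d g ca); split.
- apply: build_proper => //.
  + by move=> x y /andP [].
  + by move=> m v; have [_ _ b _] := hg m.
  + by move=> a; apply: ltn_trans (calt a) hnk.
  + by move=> m v w; have [_ _ _ p] := hg m; apply: p.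
  + by move=> a m _; apply: active_col => m' v; have [p _ _ _] := hg m'.
by apply: active_card => a; [exact: calt | exact: ltn_trans (calt a) hnk].
Qed.

Lemma part3_act n k (S : 'I_n -> sgraph) (hnk : n < k - 1)
  (HS : forall j : 'I_n, critical (k - j.+1) (S j) /\ no_isolated (S j)) (d : 'I_(k-1))
  (a0 : {dffun forall j : 'I_n, svert (S j)}) (m0 : 'I_n) :
  exists f : Uvert S -> 'I_(k - 1),
    proper_col (remove_edge (@Uadj _ S) (inr a0) (inl (Tagged (fun j => svert (S j)) (a0 m0)))) f /\
    #|active_colors f| <= n.
Proof.
have H (m : 'I_n) : exists h : S m -> nat, [/\ h (a0 m) = m, (forall x, x != a0 m -> m < h x),
     (forall x, h x < k - 1) & (forall x y, sadj x y -> h x != h y)].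
  by have [hc hn] := HS m; apply: crit_color hc hn (arith1 _ hnk).
have [g hg] := fin_all_exists H.
have gm (m : 'I_n) v : m <= g m v.
  by have [e1 e2 _ _] := hg m; case: (eqVneq v (a0 m)) => [->|/e2/ltnW //]; rewrite e1.
pose ca a := if a == a0 then nat_of_ord m0 else firstdiff (fun j => g j (a j) != j).
have calt a : ca a < n.
  rewrite /ca; case: (eqVneq a a0) => [_|wu]; first exact: ltn_ord.
  have [j wj] : exists j, a j != a0 j.
    apply/existsP; apply: contraR wu => /existsPn h; apply/eqP/ffunP => j.
    by apply/eqP; have := h j; rewrite negbK.
  apply: (@firstdiff_lt _ _ j); have [_ e2 _ _] := hg j.
  by rewrite neq_ltn e2 // orbT.
exists (Ucol d g ca); split.
- apply: build_proper => //.
  + by move=> x y /andP [].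
  + by move=> m v; have [_ _ b _] := hg m.
  + by move=> a; apply: ltn_trans (calt a) hnk.
  + move=> m v w; rewrite /remove_edge Uadj_inl => /andP [vw _].
    by have [_ _ _ p] := hg m; apply: p.
  + move=> a m; rewrite /ca; case: (eqVneq a a0) => [->|_ _]; last exact: active_col.
    have [e1 _ _ _] := hg m; rewrite e1.
    case: (eqVneq m m0) => [->|ne].
      by rewrite /remove_edge !eqxx /= !andbF.
    move=> _; apply: contra ne => /eqP e; apply/eqP/val_inj; by rewrite /= e.
by apply: active_card => a; [exact: calt | exact: ltn_trans (calt a) hnk].
Qed.

Theorem lemma1 (k i : nat) (hk : 2 <= k) (hi1 : 1 <= i) (hik : i <= k - 1)
  (S : 'I_(i - 1) -> sgraph)
  (HS : forall j : 'I_(i - 1),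
      triangle_free (S j) /\ critical (k - j.+1) (S j) /\ no_isolated (S j)) :
  (forall u : {dffun forall j : 'I_(i - 1), svert (S j)},
     exists f : Uvert S -> 'I_(k - 1),
       [/\ proper_col (@Uadj _ S) f,
           #|active_colors f| <= i &
           forall w, w != u -> f (inr w) != f (inr u)]) /\
  (forall f : Uvert S -> 'I_(k - 1),
     proper_col (@Uadj _ S) f -> i <= #|active_colors f|) /\
  (forall x y : Uvert S, Uadj x y ->
     exists f : Uvert S -> 'I_(k - 1),
       proper_col (remove_edge (@Uadj _ S) x y) f /\
       #|active_colors f| <= i - 1).
Proof.
have hnk : i - 1 < k - 1 by lia.
have HS' (j : 'I_(i - 1)) : critical (k - j.+1) (S j) /\ no_isolated (S j).
  by have [_ [? ?]] := HS j.
have k0 : 0 < k - 1 by lia.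
pose d : 'I_(k - 1) := Ordinal k0.
have ei : (i - 1).+1 = i by lia.
split; [|split].
- move=> u; have [f [p c w]] := part1 hnk HS' d u; exists f; split => //.
  by rewrite ei in c.
- by move=> f pf; have := part2 hnk HS' pf; rewrite ei.
move=> [[m v]|a] [[m' w]|b] e.
- move: e => /andP [/eqP /= mm]; subst m'; rewrite /= tagged_asE => vw.
  exact: part3_in hnk HS' d m v w vw.
- move: e => /eqP /= bm; subst v.
  have [f [pf cf]] := part3_act hnk HS' d b m; exists f; split => // x y r.
  by apply: pf; rewrite remove_edgeC.
- move: e => /eqP /= am; subst w.
  exact: part3_act hnk HS' d a m'.
by [].
Qed.
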